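(* Let $(A,\gamma)$ be a quasiordered set. If $\mathrm{hsdim}(A,\gamma)=1$, then $\gamma$ is a half-space, and $\dim\bigl(A/(\gamma\cap\gamma^{-1}),r_\gamma\bigr)=1$ if $\gamma$ has no empty box with more than one element, while $\dim\bigl(A/(\gamma\cap\gamma^{-1}),r_\gamma\bigr)=2$ if $\gamma$ has an empty box with more than one element. If $\mathrm{hsdim}(A,\gamma)\ge2$, then $\dim\bigl(A/(\gamma\cap\gamma^{-1}),r_\gamma\bigr)=\mathrm{hsdim}(A,\gamma)$.
   Context: A quasiorder on $A$ is a reflexive and transitive relation; $\Delta_A=\{(a,a)\mid a\in A\}$. A quasiorder $\alpha$ on $A$ is a half-space if there is a quasiorder $\beta$ on $A$ with $\alpha\cup\beta=A\times A$ and $\alpha\cap\beta=\Delta_A$; then $\beta=\Delta_A\cup((A\times A)\setminus\alpha)$. The boxes of a half-space $\alpha$ are the classes of the equivalence relation $\varepsilon=(\alpha\cap\alpha^{-1})\cup(\beta\cap\beta^{-1})$; a box $B$ is empty if $\alpha\cap(B\times B)=\Delta_B$ and full if $|B|>1$ and $B\times B\subseteq\alpha$ (every box is either full or empty). A half-space realizer of a quasiorder $\gamma$ on $A$ is a set $\{\alpha_i\mid i\in I\}$ of half-spaces on $A$ with $\bigcap_{i\in I}\alpha_i=\gamma$; $\mathrm{hsdim}(A,\gamma)$ is the minimum cardinality of a half-space realizer. $r_\gamma$ is the induced partial order on $A/(\gamma\cap\gamma^{-1})$: $([a],[b])\in r_\gamma$ iff $(a,b)\in\gamma$. $\dim$ denotes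 order dimension: the least cardinality of a set of linear extensions whose intersection is the given partial order. *)

(* Defs.v *)
(* relations as A -> A -> Prop on an arbitrary (possibly
   infinite) carrier type; cardinalities are compared via injections. *)

Definition rel (A : Type) := A -> A -> Prop.

Definition diag {A : Type} : rel A := fun a b => a = b.

Definition quasiorder {A : Type} (g : rel A) : Prop :=
  (forall a, g a a) /\ (forall a b c, g a b -> g b c -> g a c).

Definition half_space {A : Type} (al : rel A) : Prop :=
  quasiorder al /\
  exists be : rel A, quasiorder be /\
    (forall a b, al a b \/ be a b) /\
    (forall a b, (al a b /\ be a b) <-> a = b).

Definition hs_complement {A : Type} (al : rel A) : rel A :=
  fun a b => a = b \/ ~ al a b.

Definition box_rel {A : Type} (al : rel A) : rel A :=
  fun a b => (al a b /\ al b a) \/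
             (hs_complement al a b /\ hs_complement al b a).

Definition is_box {A : Type} (al : rel A) (B : A -> Prop) : Prop :=
  exists a, forall x, B x <-> box_rel al a x.

Definition empty_box {A : Type} (al : rel A) (B : A -> Prop) : Prop :=
  forall x y, B x -> B y -> (al x y <-> x = y).

Definition has_big_empty_box {A : Type} (al : rel A) : Prop :=
  exists B : A -> Prop, is_box al B /\ empty_box al B /\
    exists x y, B x /\ B y /\ x <> y.

Definition card_le (I J : Type) : Prop :=
  exists f : I -> J, forall i j, f i = f j -> i = j.

(* A half-space realizer of gamma indexed by I (the intersection of the
   empty family is A x A). *)
Definition hs_realizer {A : Type} (g : rel A) (I : Type) : Prop :=
  exists al : I -> rel A, (forall i, half_space (al i)) /\
    (forall a b, (forall i, al i a b) <-> g a b).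

Definition is_hsdim {A : Type} (g : rel A) (I : Type) : Prop :=
  hs_realizer g I /\ forall J : Type, hs_realizer g J -> card_le I J.

Definition gclass {A : Type} (g : rel A) (a : A) : A -> Prop :=
  fun b => g a b /\ g b a.

Definition quot {A : Type} (g : rel A) : Type :=
  { S : A -> Prop | exists a, S = gclass g a }.

Definition r_of {A : Type} (g : rel A) : rel (quot g) :=
  fun S T => exists a b, proj1_sig S = gclass g a /\
                         proj1_sig T = gclass g b /\ g a b.

Definition linear_order {P : Type} (L : rel P) : Prop :=
  (forall x, L x x) /\ (forall x y, L x y -> L y x -> x = y) /\
  (forall x y z, L x y -> L y z -> L x z) /\ (forall x y, L x y \/ L y x).

Definition linear_extension {P : Type} (r L : rel P) : Prop :=
  linear_order L /\ (forall x y, r x y -> L x y).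

Definition dim_realizer {P : Type} (r : rel P) (I : Type) : Prop :=
  exists L : I -> rel P, (forall i, linear_extension r (L i)) /\
    (forall x y, (forall i, L i x y) <-> r x y).

Definition is_dim {P : Type} (r : rel P) (I : Type) : Prop :=
  dim_realizer r I /\ forall J : Type, dim_realizer r J -> card_le I J.

(* Main.v *)
Require Import Defs.
From Stdlib Require Import Classical ClassicalEpsilon FunctionalExtensionality PropExtensionality ProofIrrelevance.
From mathcomp Require classical_sets boolp.

Definition po {P : Type} (R : rel P) : Prop :=
  (forall a, R a a) /\ (forall a b c, R a b -> R b c -> R a c) /\
  (forall a b, R a b -> R b a -> a = b).

Lemma szpilrajn (P : Type) (r : rel P) : po r -> exists L, linear_extension r L.
Proof.
  intros hr.
  set (T := {R : rel P | po R /\ forall a b, r a b -> R a b}).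
  set (t0 := exist (fun R : rel P => po R /\ forall a b, r a b -> R a b) r
               (conj hr (fun a b h => h)) : T).
  set (Rl := fun s t : T => boolp.asbool (forall a b, proj1_sig s a b -> proj1_sig t a b)).
  destruct (@classical_sets.ZL_preorder T t0 Rl) as [M HM].
  - intros t. apply boolp.asboolT. auto.
  - intros x y z h1 h2. apply boolp.asboolT.
    apply boolp.asboolW in h1. apply boolp.asboolW in h2. auto.
  - intros Ach Htot.
    destruct (classic (exists s, Ach s)) as [[s0 Hs0]|Hn].
    + assert (hp : po (fun a b => exists s, Ach s /\ proj1_sig s a b) /\
               forall a b, r a b -> (fun a b => exists s, Ach s /\ proj1_sig s a b) a b).
      { assert (cmp : forall s t, Ach s -> Ach t ->
                 (forall a b, proj1_sig s a b -> proj1_sig t a b) \/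
                 (forall a b, proj1_sig t a b -> proj1_sig s a b)).
        { intros s t hs ht. destruct (Htot s t hs ht) as [h|h];
          apply boolp.asboolW in h; auto. }
        split; [split; [|split]|].
        - intros a. exists s0. split; auto. destruct (proj2_sig s0) as [[h _] _]. apply h.
        - intros a b c [s [hs h1]] [t [ht h2]].
          destruct (cmp s t hs ht) as [e|e].
          + exists t. split; auto. destruct (proj2_sig t) as [[_ [h _]] _]. eauto.
          + exists s. split; auto. destruct (proj2_sig s) as [[_ [h _]] _]. eauto.
        - intros a b [s [hs h1]] [t [ht h2]].
          destruct (cmp s t hs ht) as [e|e].
          + destruct (proj2_sig t) as [[_ [_ h]] _]. eauto.
          + destruct (proj2_sig s) as [[_ [_ h]] _]. eauto.
        - intros a b h. exists s0. split; auto. destruct (proj2_sig s0) as [_ h']. auto. }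
      exists (exist (fun R : rel P => po R /\ forall a b, r a b -> R a b) _ hp : T). intros s hs. apply boolp.asboolT. simpl. intros a b h. eauto.
    + exists t0. intros s hs. exfalso. eauto.
  - destruct M as [M [[Mr [Mt Ma]] Mext]]. exists M.
    split; [|exact Mext]. split; [exact Mr|]. split; [exact Ma|]. split; [exact Mt|].
    intros x y. apply NNPP. intros hn.
    assert (hxy : ~ M x y) by tauto. assert (hyx : ~ M y x) by tauto.
    set (M' := fun a b => M a b \/ (M a x /\ M y b)).
    assert (hp : po M' /\ forall a b, r a b -> M' a b).
    { unfold M'. split; [split; [|split]|].
      - intros a; left; auto.
      - intros a b c [h1|[h1 h1']] [h2|[h2 h2']].
        + left; eauto.
        + right; split; eauto.
        + right; split; eauto.
        + exfalso. apply hyx. eauto.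
      - intros a b [h1|[h1 h1']] [h2|[h2 h2']].
        + auto.
        + exfalso; apply hyx; eauto.
        + exfalso; apply hyx; eauto.
        + exfalso; apply hyx; eauto.
      - intros a b h; left; auto. }
    specialize (HM (exist (fun R : rel P => po R /\ forall a b, r a b -> R a b) M' hp : T)).
    assert (h : Rl (exist (fun R : rel P => po R /\ forall a b, r a b -> R a b) M (conj (conj Mr (conj Mt Ma)) Mext) : T) (exist (fun R : rel P => po R /\ forall a b, r a b -> R a b) M' hp : T) = true).
    { apply boolp.asboolT. simpl. unfold M'. auto. }
    apply HM in h. apply boolp.asboolW in h. simpl in h.
    apply hxy. apply h. unfold M'. right. auto.
Qed.

Definition flip {P : Type} (R : rel P) : rel P := fun a b => R b a.
Definition lex {P : Type} (pi W : rel P) : rel P :=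
  fun a b => (pi a b /\ ~ pi b a) \/ (pi a b /\ pi b a /\ W a b).
Definition totpre {P : Type} (pi : rel P) : Prop :=
  (forall a, pi a a) /\ (forall a b c, pi a b -> pi b c -> pi a c) /\ (forall a b, pi a b \/ pi b a).
Definition wlin {P : Type} (pi W : rel P) : Prop :=
 (forall a, W a a) /\
 (forall a b, pi a b -> pi b a -> W a b \/ W b a) /\
 (forall a b, pi a b -> pi b a -> W a b -> W b a -> a = b) /\
 (forall a b c, pi a b -> pi b a -> pi b c -> pi c b -> W a b -> W b c -> W a c).

Lemma lex_lin (P : Type) (pi W : rel P) : totpre pi -> wlin pi W -> linear_order (lex pi W).
Proof.
  intros [pr [pt ptot]] [wr [wt [wa wtr]]]. unfold lex; split; [|split; [|split]].
  - intro x. right. auto.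
  - intros x y [[? ?]|[? [? ?]]] [[? ?]|[? [? ?]]]; try tauto. auto.
  - intros x y z [[h1 h2]|[h1 [h2 h3]]] [[h4 h5]|[h4 [h5 h6]]].
    + left. split. eauto. intro. apply h5. eauto.
    + left. split. eauto. intro. apply h2. eauto.
    + left. split. eauto. intro. apply h5. eauto.
    + right. split. eauto. split. eauto. eauto.
  - intros x y. destruct (ptot x y) as [h|h].
    + destruct (classic (pi y x)) as [h'|h'].
      * destruct (wt x y h h') as [w|w]; [left|right]; right; auto.
      * left; left; auto.
    + destruct (classic (pi x y)) as [h'|h'].
      * destruct (wt x y h' h) as [w|w]; [left|right]; right; auto.
      * right; left; auto.
Qed.

Lemma lex_pi (P : Type) (pi W : rel P) a b : lex pi W a b -> pi a b.
Proof. unfold lex; tauto. Qed.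
Lemma lex_W (P : Type) (pi W : rel P) a b : lex pi W a b -> pi b a -> W a b.
Proof. unfold lex; tauto. Qed.

Lemma lin_totpre (P : Type) (S : rel P) : linear_order S -> totpre S.
Proof. intros [a [b [c d]]]. split; [|split]; auto. Qed.
Lemma lin_wlin (P : Type) (pi S : rel P) : linear_order S -> wlin pi S.
Proof. intros [a [b [c d]]]. split; [|split; [|split]]; eauto. Qed.
Lemma flip_lin (P : Type) (S : rel P) : linear_order S -> linear_order (flip S).
Proof. unfold flip. intros [a [b [c d]]]. split; [|split; [|split]]; eauto. Qed.
Lemma flip_totpre (P : Type) (S : rel P) : totpre S -> totpre (flip S).
Proof. unfold flip. intros [a [b c]]. split; [|split]; eauto. Qed.

Definition hsp {P : Type} (al : rel P) : Prop :=
  quasiorder al /\ forall a b c, (a = b \/ ~ al a b) -> (b = c \/ ~ al b c) -> (a = c \/ ~ al a c).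

Definition hpi {P : Type} (al : rel P) : rel P := fun a b => al a b \/ ~ al b a.
Definition hW {P : Type} (al U V : rel P) : rel P :=
  fun a b => (al a b /\ al b a /\ U a b) \/ (~ al a b /\ ~ al b a /\ V a b).

Lemma hpi_tot (P : Type) (al : rel P) : hsp al -> totpre (hpi al).
Proof.
  intros [[ar at'] bt]. unfold hpi. split; [|split].
  - intros; left; auto.
  - intros a b c h1 h2. apply NNPP. intros hn.
    assert (n1 : ~ al a c) by tauto. assert (n2 : al c a) by tauto.
    destruct h1 as [h1|h1]; destruct h2 as [h2|h2].
    + eauto.
    + apply h2; eauto.
    + apply h1; eauto.
    + destruct (bt c b a (or_intror h2) (or_intror h1)) as [e|e].
      * subst. auto.
      * auto.
  - intros a b. destruct (classic (al a b)); tauto.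
Qed.

Lemma hW_wlin (P : Type) (al U V : rel P) : hsp al -> linear_order U -> linear_order V ->
  wlin (hpi al) (hW al U V).
Proof.
  intros [[ar at'] bt] [ur [ua [ut utot]]] [vr [va [vt vtot]]]. unfold hW, hpi.
  split; [|split; [|split]].
  - intros a. left. auto.
  - intros a b h1 h2.
    destruct (classic (al a b)); destruct (classic (al b a)); try tauto.
    + destruct (utot a b); tauto.
    + destruct (vtot a b); tauto.
  - intros a b _ _ [[? [? ?]]|[? [? ?]]] [[? [? ?]]|[? [? ?]]]; try tauto; auto.
  - intros a b c _ _ _ _ [[h1 [h2 h3]]|[h1 [h2 h3]]] [[h4 [h5 h6]]|[h4 [h5 h6]]].
    + left. split; [eauto|split; eauto].
    + destruct (classic (a = b)) as [e|e]. { subst. right. auto. }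
      exfalso. assert (n1 : ~ al a c) by (intro; apply h4; eauto).
      destruct (bt a c b (or_intror n1) (or_intror h5)) as [e'|e']; auto.
    + destruct (classic (b = c)) as [e|e]. { subst. right. auto. }
      exfalso. assert (n1 : ~ al a c) by (intro; apply h1; eauto).
      destruct (bt b a c (or_intror h2) (or_intror n1)) as [e'|e']; auto.
    + destruct (classic (a = c)) as [e|e]. { subst. left. auto. }
      right. destruct (bt a b c (or_intror h1) (or_intror h4)) as [e1|e1]; [tauto|].
      destruct (bt c b a (or_intror h5) (or_intror h2)) as [e2|e2]; [subst; tauto|].
      split; [auto|split; eauto].
Qed.

Lemma main_construct (P K : Type) (r : rel P) (al : K -> rel P) (k1 kn : K) :
  (forall a, r a a) -> (forall a b, r a b -> r b a -> a = b) ->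
  (forall i, hsp (al i)) -> (forall a b, (forall i, al i a b) <-> r a b) -> k1 <> kn ->
  forall S0 : rel P, linear_extension r S0 ->
  dim_realizer r K.
Proof.
  intros rr ra hs hreal hk S0 [S0l S0e].
  set (T := lex (flip (hpi (al kn))) (flip S0)).
  set (T' := lex (flip (hpi (al k1))) (hW (al k1) (flip S0) S0)).
  assert (Tl : linear_order T).
  { apply lex_lin. apply flip_totpre, hpi_tot; auto. apply lin_wlin, flip_lin; auto. }
  assert (T'l : linear_order T').
  { apply lex_lin. apply flip_totpre, hpi_tot; auto.
    unfold wlin. destruct (hW_wlin P (al k1) (flip S0) S0 (hs k1) (flip_lin _ _ S0l) S0l)
      as [w1 [w2 [w3 w4]]]. unfold flip at 1 2 3 4 5 6 7 8. split; [|split; [|split]]; eauto. }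
  set (Ti := fun i => if excluded_middle_informative (i = kn) then T' else T).
  assert (Til : forall i, linear_order (Ti i)).
  { intros i. unfold Ti. destruct (excluded_middle_informative (i = kn)); auto. }
  assert (ext : forall i a b, r a b -> lex (hpi (al i)) (hW (al i) S0 (Ti i)) a b).
  { intros i a b h. assert (hab : al i a b) by (apply hreal; auto).
      unfold lex, hpi. destruct (classic (al i b a)) as [h'|h'].
      * right. split; [auto|split; [auto|]]. left. auto.
      * left. tauto. }
  exists (fun i => lex (hpi (al i)) (hW (al i) S0 (Ti i))).
  split.
  - intros i. split.
    + apply lex_lin. apply hpi_tot; auto. apply hW_wlin; auto.
    + apply ext.
  - intros a b; split; [|].
    + intros H. cbv beta in H. apply NNPP. intros hn.
      assert (hne : a <> b) by (intro; subst; auto).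
      assert (hj : exists j, ~ al j a b).
      { apply NNPP. intro hh. apply hn. apply hreal. intro j. apply NNPP. intro. eauto. }
      destruct hj as [j hj].
      assert (Hn := H kn). assert (Hj := H j). assert (H1 := H k1).
      assert (Tn : Ti kn = T') by (unfold Ti; destruct (excluded_middle_informative (kn = kn)); tauto).
      assert (T1 : Ti k1 = T) by (unfold Ti; destruct (excluded_middle_informative (k1 = kn)); tauto).
      rewrite Tn in Hn. rewrite T1 in H1.
      assert (pn : hpi (al kn) a b) by (eapply lex_pi; eauto).
      destruct Tl as [_ [Ta _]]. destruct S0l as [_ [S0a _]].
      destruct (classic (hpi (al kn) b a)) as [pnb|pnb].
      * apply (lex_W _ _ _ _ _ Hn) in pnb as Hn2. clear Hn; rename Hn2 into Hn. destruct Hn as [[u1 [u2 u3]]|[u1 [u2 u3]]].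
        --
           assert (jn : j <> kn) by (intro; subst; auto).
           assert (Tj : Ti j = T) by (unfold Ti; destruct (excluded_middle_informative (j = kn)); tauto).
           rewrite Tj in Hj. assert (pj : hpi (al j) a b) by (eapply lex_pi; eauto).
           assert (pjb : hpi (al j) b a) by (unfold hpi; tauto).
           apply (lex_W _ _ _ _ _ Hj) in pjb as Hj2. clear Hj; rename Hj2 into Hj. destruct Hj as [[? [? ?]]|[_ [_ w]]]; [tauto|].
           unfold T in w. assert (w2 := lex_W _ _ _ _ _ w). unfold flip in w2. specialize (w2 pn). rename w2 into w'. unfold flip in w. auto.
        --
           unfold T' in u3. assert (p1b : hpi (al k1) b a) by (eapply lex_pi in u3; exact u3).
           assert (p1 : hpi (al k1) a b) by (eapply lex_pi; eauto).
           assert (u4 := lex_W _ _ _ _ _ u3). unfold flip in u4. specialize (u4 p1).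
           apply (lex_W _ _ _ _ _ H1) in p1b as H1'.
           unfold hW, flip in u4, H1'.
           destruct u4 as [[? [? ?]]|[? [? ?]]]; destruct H1' as [[? [? ?]]|[? [? w]]]; try tauto.
           ++ apply hne; auto.
           ++ unfold T in w. assert (w2 := lex_W _ _ _ _ _ w). unfold flip in w2. specialize (w2 pn). rename w2 into w'. unfold flip in w. auto.
      * assert (an : al kn a b) by (unfold hpi in *; tauto).
        assert (jn : j <> kn) by (intro; subst; auto).
        assert (Tj : Ti j = T) by (unfold Ti; destruct (excluded_middle_informative (j = kn)); tauto).
        rewrite Tj in Hj. assert (pj : hpi (al j) a b) by (eapply lex_pi; eauto).
        assert (pjb : hpi (al j) b a) by (unfold hpi; tauto).
        apply (lex_W _ _ _ _ _ Hj) in pjb as Hj2. clear Hj; rename Hj2 into Hj. destruct Hj as [[? [? ?]]|[_ [_ w]]]; [tauto|].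
        unfold T in w. apply lex_pi in w. unfold flip in w. auto.
    + intros h i. apply ext; auto.
Qed.

Definition cls {A : Type} (g : rel A) (a : A) : quot g :=
  exist (fun S => exists a, S = gclass g a) (gclass g a) (ex_intro _ a eq_refl).

Lemma quot_surj (A : Type) (g : rel A) (S : quot g) : exists a, S = cls g a.
Proof.
  destruct S as [S [a e]]. exists a. subst. reflexivity.
Qed.

Lemma cls_eq (A : Type) (g : rel A) (hg : quasiorder g) a b :
  cls g a = cls g b <-> g a b /\ g b a.
Proof.
  destruct hg as [gr gt]. split.
  - intros e. apply (f_equal (@proj1_sig _ _)) in e. simpl in e.
    assert (h : gclass g a a) by (split; auto). rewrite e in h. destruct h; split; auto.
  - intros [h1 h2]. unfold cls.
    assert (e : gclass g a = gclass g b).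
    { apply functional_extensionality. intro x. apply propositional_extensionality.
      unfold gclass. split; intros [u v]; split; eauto. }
    revert e. generalize (ex_intro (fun a0 => gclass g a = gclass g a0) a eq_refl).
    generalize (ex_intro (fun a0 => gclass g b = gclass g a0) b eq_refl).
    intros p q e. revert p q. rewrite e. intros p q. f_equal. apply proof_irrelevance.
Qed.

Lemma r_of_cls (A : Type) (g : rel A) (hg : quasiorder g) a b :
  r_of g (cls g a) (cls g b) <-> g a b.
Proof.
  destruct hg as [gr gt]. split.
  - intros [a' [b' [e1 [e2 h]]]]. simpl in e1, e2.
    assert (h1 : gclass g a a) by (split; auto). rewrite e1 in h1.
    assert (h2 : gclass g b b) by (split; auto). rewrite e2 in h2.
    destruct h1, h2. eauto.
  - intros h. exists a, b. simpl. auto.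
Qed.

Lemma r_of_po (A : Type) (g : rel A) (hg : quasiorder g) : po (r_of g).
Proof.
  split; [|split].
  - intros S. destruct (quot_surj _ _ S) as [a ->]. apply r_of_cls; auto. apply hg.
  - intros S T U. destruct (quot_surj _ _ S) as [a ->]. destruct (quot_surj _ _ T) as [b ->].
    destruct (quot_surj _ _ U) as [c ->]. rewrite !r_of_cls; auto. apply hg.
  - intros S T. destruct (quot_surj _ _ S) as [a ->]. destruct (quot_surj _ _ T) as [b ->].
    rewrite !r_of_cls; auto. intros. apply cls_eq; auto.
Qed.

Definition lift {A : Type} (g al : rel A) : rel (quot g) :=
  fun S T => exists a b, S = cls g a /\ T = cls g b /\ al a b.

Lemma lift_cls (A : Type) (g al : rel A) (hg : quasiorder g) (ha : quasiorder al)
  (sub : forall a b, g a b -> al a b) a b : lift g al (cls g a) (cls g b) <-> al a b.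
Proof.
  split.
  - intros [a' [b' [e1 [e2 h]]]]. apply cls_eq in e1; auto. apply cls_eq in e2; auto.
    destruct ha as [_ t]. destruct e1, e2. eauto.
  - intros h. exists a, b. auto.
Qed.

Lemma hc_trans (A : Type) (al : rel A) : half_space al ->
  forall a b c, (a = b \/ ~ al a b) -> (b = c \/ ~ al b c) -> (a = c \/ ~ al a c).
Proof.
  intros [[ar at'] [be [[br bt] [bu bi]]]].
  assert (e : forall a b, (a = b \/ ~ al a b) <-> be a b).
  { intros a b. split.
    - intros [h|h]. subst; auto. destruct (bu a b); tauto.
    - intros h. destruct (classic (a = b)); auto. right. intro h'.
      apply H. apply bi. auto. }
  intros a b c h1 h2. apply e. apply e in h1. apply e in h2. eauto.
Qed.

Lemma lift_hsp (A : Type) (g al : rel A) (hg : quasiorder g) (ha : half_space al)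
  (sub : forall a b, g a b -> al a b) : hsp (lift g al).
Proof.
  assert (hq : quasiorder al) by apply ha.
  split; [split|].
  - intros S. destruct (quot_surj _ _ S) as [a ->]. apply lift_cls; auto. apply hq.
  - intros S T U. destruct (quot_surj _ _ S) as [a ->]. destruct (quot_surj _ _ T) as [b ->].
    destruct (quot_surj _ _ U) as [c ->]. rewrite !lift_cls; auto. apply hq.
  - intros S T U. destruct (quot_surj _ _ S) as [a ->]. destruct (quot_surj _ _ T) as [b ->].
    destruct (quot_surj _ _ U) as [c ->].
    assert (LC : forall x y, lift g al (cls g x) (cls g y) <-> al x y) by (intros; apply lift_cls; auto).
    intros [h1|h1] [h2|h2].
    + left. congruence.
    + rewrite h1. exact (or_intror h2).
    + rewrite <- h2. exact (or_intror h1).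
    + assert (n1 : ~ al a b) by (intro; apply h1; apply LC; auto).
      assert (n2 : ~ al b c) by (intro; apply h2; apply LC; auto).
      destruct (hc_trans _ _ ha a b c (or_intror n1) (or_intror n2)) as [e|e].
      * subst. auto.
      * right. intro h. apply e. apply LC. auto.
Qed.

Lemma dim_to_hs (A : Type) (g : rel A) (hg : quasiorder g) (J : Type) :
  dim_realizer (r_of g) J -> hs_realizer g J.
Proof.
  intros [L [Lext Lr]].
  exists (fun j a b => L j (cls g a) (cls g b)). split.
  - intros j. destruct (Lext j) as [[Lrf [La [Lt Ltot]]] _]. split.
    + split; eauto.
    + exists (fun a b => a = b \/ ~ L j (cls g a) (cls g b)). split; [split|split].
      * auto.
      * intros a b c [h1|h1] [h2|h2]; try (subst; auto; fail).
        right. intro h3. destruct (Ltot (cls g a) (cls g b)) as [h4|h4]; auto.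
        destruct (Ltot (cls g b) (cls g c)) as [h5|h5]; auto.
        assert (e : cls g c = cls g a) by eauto. rewrite e in h5. auto.
      * intros a b. destruct (classic (L j (cls g a) (cls g b))); auto.
      * intros a b. split. intros [h [h'|h']]; tauto. intros ->. split; auto.
  - intros a b. rewrite <- (r_of_cls _ g hg a b). apply Lr.
Qed.

Lemma hs_to_dim (A : Type) (g : rel A) (hg : quasiorder g) (K : Type) (k1 kn : K) :
  k1 <> kn -> hs_realizer g K -> dim_realizer (r_of g) K.
Proof.
  intros hk [al [hal hr]].
  assert (sub : forall i a b, g a b -> al i a b) by (intros; apply hr; auto).
  destruct (szpilrajn _ (r_of g) (r_of_po _ g hg)) as [S0 HS0].
  destruct (r_of_po _ g hg) as [rr [_ ra]].
  apply (main_construct (quot g) K (r_of g) (fun i => lift g (al i)) k1 kn rr ra) with (S0 := S0); auto.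
  - intros i. apply lift_hsp; auto.
  - intros S T. destruct (quot_surj _ _ S) as [a ->]. destruct (quot_surj _ _ T) as [b ->].
    rewrite r_of_cls; auto. rewrite <- hr. split.
    + intros h i. apply (lift_cls _ g (al i) hg (proj1 (hal i)) (sub i)). auto.
    + intros h i. apply (lift_cls _ g (al i) hg (proj1 (hal i)) (sub i)). auto.
Qed.

Lemma not_total (A : Type) (g : rel A) : is_hsdim g unit -> exists a b, ~ g a b.
Proof.
  intros [_ hmin]. apply NNPP. intros hn.
  assert (h : hs_realizer g Empty_set).
  { exists (fun e : Empty_set => match e with end). split.
    - intros [].
    - intros a b. split. intros _. apply NNPP. intro. apply hn. eauto. intros _ [] . }
  destruct (hmin _ h) as [f _]. destruct (f tt).
Qed.

Lemma dim_inh (A : Type) (g : rel A) (hg : quasiorder g) J :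
  (exists a b, ~ g a b) -> dim_realizer (r_of g) J -> exists j : J, True.
Proof.
  intros [a [b hab]] [L [_ Lr]]. apply NNPP. intros hn. apply hab.
  apply (r_of_cls _ g hg). apply Lr. intros j. exfalso. eauto.
Qed.

Theorem theorem2p15 (A : Type) (g : rel A) (hg : quasiorder g) :
  (is_hsdim g unit ->
     half_space g /\
     (~ has_big_empty_box g -> is_dim (r_of g) unit) /\
     (has_big_empty_box g -> is_dim (r_of g) bool)) /\
  (forall K : Type, is_hsdim g K -> card_le bool K -> is_dim (r_of g) K).
Proof.
  split.
  - intros hd. assert (nt := not_total _ _ hd).
    destruct hd as [[al [hal hr]] hmin].
    assert (hsg : half_space g).
    { destruct (hal tt) as [_ [be [hb [hu hi]]]]. split; auto.
      exists be. split; auto. split.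
      - intros a b. destruct (hu a b); [left; apply hr; intros []; auto|auto].
      - intros a b. rewrite <- hi. split; intros [h1 h2]; split; auto.
        + exact (proj2 (hr a b) h1 tt).
        + apply (proj1 (hr a b)). intros []. auto. }
    split; [exact hsg|split].
    + intros nb. split.
      * exists (fun _ : unit => r_of g). split.
        -- intros _. split; [|auto].
           destruct (r_of_po _ g hg) as [rr [rt ra]]. split; [auto|split; [auto|split; [eauto|]]].
           intros S T. destruct (quot_surj _ _ S) as [a ->]. destruct (quot_surj _ _ T) as [b ->].
           rewrite !r_of_cls; auto. apply NNPP. intros hn. apply nb.
           destruct hg as [gr gt].
           exists (box_rel g a). split; [exists a; tauto|split].
           ++
              assert (hct : forall x y z, hs_complement g x y -> hs_complement g y z -> hs_complement g x z).
              { intros. eapply hc_trans; eauto. }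
              assert (key : forall x, box_rel g a x -> x = a \/ (~ g a x /\ ~ g x a)).
              { intros x [[u v]|[u v]].
                - destruct (classic (x = a)); auto. exfalso.
                  assert (h1 : hs_complement g x b) by (right; intro; apply hn; left; eauto).
                  assert (h2 : hs_complement g b a) by (right; intro; apply hn; right; auto).
                  destruct (hct _ _ _ h1 h2) as [e|e]; auto.
                - destruct u as [u|u]; [auto|]. destruct v as [v|v]; [subst; auto|]. auto. }
              intros x y hx hy. split; [|intros ->; auto].
              intros hxy. destruct (key x hx) as [ex|[nx1 nx2]]; destruct (key y hy) as [ey|[ny1 ny2]].
              ** congruence.
              ** subst. tauto.
              ** subst. tauto.
              ** destruct (hct x a y (or_intror nx2) (or_intror ny1)) as [e|e]; tauto.
           ++ exists a, b. split; [right; split; left; auto|]. split.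
              ** right. split; right; intro; apply hn; auto.
              ** intro; subst; apply hn; auto.
        -- intros S T. split; intros h; [apply (h tt)|intros _; auto].
      * intros J hJ. destruct (dim_inh _ g hg J nt hJ) as [j _]. exists (fun _ => j).
        intros [] [] _. auto.
    + intros [B [[a0 hB] [he [x [y [hx [hy hxy]]]]]]]. split.
      * apply (hs_to_dim _ g hg bool true false); [discriminate|].
        exists (fun _ => g). split; [auto|]. intros a b; split; intros h; [apply (h true)|auto].
      * intros J hJ. destruct (dim_inh _ g hg J nt hJ) as [j _].
        destruct (classic (exists j1 j2 : J, j1 <> j2)) as [[j1 [j2 hj]]|hn].
        -- exists (fun b : bool => if b then j1 else j2). intros [] [] e; auto; congruence.
        -- exfalso. destruct hJ as [L [Lext Lr]].
           destruct (Lext j) as [[_ [_ [_ Ltot]]] _].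
           assert (gx : forall u v, L j (cls g u) (cls g v) -> g u v).
           { intros u v h. apply (r_of_cls _ g hg). apply Lr. intros j'.
             assert (e : j' = j) by (apply NNPP; intro; apply hn; eauto). subst. auto. }
           destruct (Ltot (cls g x) (cls g y)) as [h|h]; apply gx in h.
           ++ apply hxy. apply (he x y hx hy). auto.
           ++ apply hxy. symmetry. apply (he y x hy hx). auto.
  - intros K [hK hmin] [f hf]. split.
    + apply (hs_to_dim _ g hg K (f true) (f false)); auto.
    + intros J hJ. apply hmin. apply dim_to_hs; auto.
Qed.
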